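(* For $p\ge 1$ let $\Delta_p\subset\mathbf R^2$ be the rectangle with vertices $(0,0),(p,0),(p,1),(0,1)$, let $U_p=\{(a,b,c): a\mu_1+b\mu_2+c>0 \text{ on }\Delta_p\}$, and let $$E_p(a,b,c)=8\pi^2\,\frac{\left(\int_{\partial\Delta_p}(a\mu_1+b\mu_2+c)^{-2}\,d\sigma\right)^2}{\int_{\Delta_p}(a\mu_1+b\mu_2+c)^{-4}\,d\mu},$$ viewed as a function on $U_p/\mathbf R_+$. If $1\le p\le 2$, then $E_p$ has the unique critical point $[(0,0,1)]$. If $p>2$, then $E_p$ has exactly three critical points: $$[(0,0,1)],\qquad \left[\left(\pm1,\,0,\,\tfrac12\left(\tfrac{p^{3/2}}{\sqrt{p-2}}\mp p\right)\right)\right].$$ *)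

(* Defs.v *)
From Stdlib Require Import Reals ClassicalEpsilon.
Open Scope R_scope.

(* Value of the Riemann integral of f over [a,b] (0 if not integrable;
   well defined since RiemannInt does not depend on the integrability proof). *)
Definition RInt (f : R -> R) (a b : R) : R :=
  epsilon (inhabits 0)
    (fun l => exists pr : Riemann_integrable f a b, RiemannInt pr = l).

Definition In_U (p a b c : R) : Prop :=
  forall x y, 0 <= x <= p -> 0 <= y <= 1 -> 0 < a * x + b * y + c.

(* Integral over the boundary of Delta_p of (a mu1 + b mu2 + c)^(-2) d sigma:
   sum over the four edges, parametrized by arclength. *)
Definition boundary_int (p a b c : R) : R :=
    RInt (fun t => / (a * t + b * 0 + c) ^ 2) 0 p
  + RInt (fun t => / (a * t + b * 1 + c) ^ 2) 0 p
  + RInt (fun s => / (a * 0 + b * s + c) ^ 2) 0 1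
  + RInt (fun s => / (a * p + b * s + c) ^ 2) 0 1.

Definition area_int (p a b c : R) : R :=
  RInt (fun x => RInt (fun y => / (a * x + b * y + c) ^ 4) 0 1) 0 p.

Definition E (p a b c : R) : R :=
  8 * PI ^ 2 * (boundary_int p a b c) ^ 2 / area_int p a b c.

(* (a,b,c) is a critical point of F : R^3 -> R : F is (Frechet) differentiable
   at (a,b,c) with zero differential. *)
Definition is_critical (F : R -> R -> R -> R) (a b c : R) : Prop :=
  forall eps, 0 < eps -> exists delta, 0 < delta /\
    forall h1 h2 h3, Rabs h1 < delta -> Rabs h2 < delta -> Rabs h3 < delta ->
      Rabs (F (a + h1) (b + h2) (c + h3) - F a b c)
        <= eps * (Rabs h1 + Rabs h2 + Rabs h3).

(* Main.v *)
Require Import Defs.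
From Stdlib Require Import Reals Lra Lia Psatz ClassicalEpsilon.
From Coquelicot Require Import Coquelicot.
Open Scope R_scope.

Lemma RInt_of_is (f : R -> R) a b v : is_RInt f a b v -> Defs.RInt f a b = v.
Proof.
  intros H.
  assert (He : ex_RInt f a b) by (exists v; exact H).
  pose proof (ex_RInt_Reals_0 f a b He) as pr.
  assert (Hv : RiemannInt pr = v).
  { rewrite <- (RInt_Reals f a b pr). apply is_RInt_unique. exact H. }
  unfold Defs.RInt.
  destruct (epsilon_spec (inhabits 0)
      (fun l => exists pr : Riemann_integrable f a b, RiemannInt pr = l)) as [pr' Hpr'].
  { exists v, pr; exact Hv. }
  rewrite <- Hpr', <- Hv. apply RiemannInt_P5.
Qed.

Lemma edge_is (al d L : R) : 0 <= L -> 0 < d -> 0 < al * L + d ->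
  is_RInt (fun t => / (al * t + d) ^ 2) 0 L (L / (d * (al * L + d))).
Proof.
  intros HL Hd HdL.
  assert (pos : forall t, 0 <= t <= L -> 0 < al * t + d).
  { intros t Ht. destruct (Rle_dec 0 al).
    - nra.
    - nra. }
  replace (L / (d * (al * L + d))) with
    (minus ((fun t => t / (d * (al * t + d))) L) ((fun t => t / (d * (al * t + d))) 0)).
  2:{ unfold minus, plus, opp; simpl. field. lra. }
  apply (is_RInt_derive (fun t => t / (d * (al * t + d))) (fun t => / (al * t + d) ^ 2)).
  - intros x Hx. rewrite Rmin_left in Hx by lra. rewrite Rmax_right in Hx by lra.
    specialize (pos x Hx).
    auto_derive.
    + apply Rmult_integral_contrapositive_currified; lra.
    + field. lra.
  - intros x Hx. rewrite Rmin_left in Hx by lra. rewrite Rmax_right in Hx by lra.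
    specialize (pos x Hx).
    apply (ex_derive_continuous (fun t => / (al * t + d) ^ 2)). auto_derive. apply Rmult_integral_contrapositive_currified; lra.
Qed.


Lemma conv_pos (x y t : R) : 0 < x -> 0 < y -> 0 <= t <= 1 -> 0 < (1 - t) * x + t * y.
Proof.
  intros Hx Hy Ht. destruct (Rle_lt_dec t 0).
  - assert (t = 0) by lra. subst. lra.
  - assert (0 <= (1 - t) * x) by (apply Rmult_le_pos; lra).
    assert (0 < t * y) by (apply Rmult_lt_0_compat; lra). lra.
Qed.

Lemma inner_is (w b : R) : 0 < w -> 0 < w + b ->
  is_RInt (fun y => / (w + b * y) ^ 4) 0 1
    ((3 * w ^ 2 + 3 * w * b + b ^ 2) / (3 * w ^ 3 * (w + b) ^ 3)).
Proof.
  intros Hw Hwb.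
  assert (pos : forall t, 0 <= t <= 1 -> 0 < w + b * t) by (intros t Ht; replace (w + b * t) with ((1 - t) * w + t * (w + b)) by ring; apply conv_pos; lra).
  pose (F := fun y => y * (3 * w ^ 2 + 3 * w * b * y + b ^ 2 * y ^ 2) / (3 * w ^ 3 * (w + b * y) ^ 3)).
  replace ((3 * w ^ 2 + 3 * w * b + b ^ 2) / (3 * w ^ 3 * (w + b) ^ 3)) with (minus (F 1) (F 0)).
  2:{ unfold F, minus, plus, opp; simpl. field. lra. }
  apply (is_RInt_derive F (fun y => / (w + b * y) ^ 4)).
  - intros x Hx. rewrite Rmin_left in Hx by lra. rewrite Rmax_right in Hx by lra.
    specialize (pos x Hx). unfold F.
    auto_derive.
    + repeat apply Rmult_integral_contrapositive_currified; lra.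
    + field. lra.
  - intros x Hx. rewrite Rmin_left in Hx by lra. rewrite Rmax_right in Hx by lra.
    specialize (pos x Hx).
    apply (ex_derive_continuous (fun t => / (w + b * t) ^ 4)). auto_derive.
    repeat apply Rmult_integral_contrapositive_currified; lra.
Qed.

Definition Qp (v c b : R) : R :=
  2 * v^3 * c + v^3 * b + 2 * v^2 * c^2 + 5 * v^2 * c * b + 2 * v^2 * b^2 + 2 * v * c^3
  + 5 * v * c^2 * b + 4 * v * c * b^2 + v * b^3 + c^3 * b + 2 * c^2 * b^2 + c * b^3.

Lemma outer_is (a b c p : R) : 0 <= p -> 0 < c -> 0 < c + b -> 0 < a * p + c -> 0 < a * p + c + b ->
  is_RInt (fun x => (3 * (a * x + c) ^ 2 + 3 * (a * x + c) * b + b ^ 2) / (3 * (a * x + c) ^ 3 * ((a * x + c) + b) ^ 3)) 0 p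
    (p * Qp (c + a * p) c b / (6 * c^2 * (c + b)^2 * (c + a * p)^2 * (c + a * p + b)^2)).
Proof.
  intros Hp Hc Hcb Hap Hapb.
  assert (Hp0 : 0 < p \/ p = 0) by lra.
  assert (pos1 : forall t, 0 <= t <= p -> 0 < a * t + c).
  { intros t Ht. destruct Hp0 as [Hp0|Hp0]; [|subst; assert (t = 0) by lra; subst; lra].
    replace (a * t + c) with ((1 - t/p) * c + (t/p) * (a * p + c)) by (field; lra).
    apply conv_pos; try lra. split; [apply Rdiv_le_0_compat; lra|]. assert (t = (t/p)*p) by (field; lra). nra. }
  assert (pos2 : forall t, 0 <= t <= p -> 0 < a * t + c + b).
  { intros t Ht. destruct Hp0 as [Hp0|Hp0]; [|subst; assert (t = 0) by lra; subst; lra].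
    replace (a * t + c + b) with ((1 - t/p) * (c + b) + (t/p) * (a * p + c + b)) by (field; lra).
    apply conv_pos; try lra. split; [apply Rdiv_le_0_compat; lra|]. assert (t = (t/p)*p) by (field; lra). nra. }
  pose (F := fun x => x * Qp (c + a * x) c b / (6 * c^2 * (c + b)^2 * (c + a * x)^2 * (c + a * x + b)^2)).
  replace (p * Qp (c + a * p) c b / (6 * c^2 * (c + b)^2 * (c + a * p)^2 * (c + a * p + b)^2)) with (minus (F p) (F 0)).
  2:{ unfold F, minus, plus, opp; simpl. field. repeat split; lra. }
  apply (is_RInt_derive F).
  - intros x Hx. rewrite Rmin_left in Hx by lra. rewrite Rmax_right in Hx by lra.
    specialize (pos1 x Hx). specialize (pos2 x Hx). unfold F, Qp.
    auto_derive.
    + repeat apply Rmult_integral_contrapositive_currified; lra.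
    + field. repeat split; lra.
  - intros x Hx. rewrite Rmin_left in Hx by lra. rewrite Rmax_right in Hx by lra.
    specialize (pos1 x Hx). specialize (pos2 x Hx).
    apply (ex_derive_continuous (fun x => (3 * (a * x + c) ^ 2 + 3 * (a * x + c) * b + b ^ 2) / (3 * (a * x + c) ^ 3 * ((a * x + c) + b) ^ 3))). auto_derive.
    repeat apply Rmult_integral_contrapositive_currified; lra.
Qed.


Definition V3 := (R * R * R)%type.
Definition p1 (t : V3) : R := fst (fst t).
Definition p2 (t : V3) : R := snd (fst t).
Definition p3 (t : V3) : R := snd t.

Definition FD (f : V3 -> R) (x : V3) (g1 g2 g3 : R) : Prop :=
  filterdiff (K := R_AbsRing) (U := prod_NormedModule R_AbsRing (prod_NormedModule R_AbsRing R_NormedModule R_NormedModule) R_NormedModule) (V := R_NormedModule)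
    f (locally x) (fun h => g1 * p1 h + g2 * p2 h + g3 * p3 h).

Definition U3 := prod_NormedModule R_AbsRing (prod_NormedModule R_AbsRing R_NormedModule R_NormedModule) R_NormedModule.

Ltac rfix := match goal with |- @eq _ ?a ?b => change (@eq R a b) end.

Lemma lin_p1 : is_linear (K := R_AbsRing) (U := U3) (V := R_NormedModule) p1.
Proof. unfold p1. apply (is_linear_comp (fun t : U3 => fst t) (fun t => fst t)); apply is_linear_fst. Qed.
Lemma lin_p2 : is_linear (K := R_AbsRing) (U := U3) (V := R_NormedModule) p2.
Proof. unfold p2. apply (is_linear_comp (fun t : U3 => fst t) (fun t => snd t)). apply is_linear_fst. apply is_linear_snd. Qed.
Lemma lin_p3 : is_linear (K := R_AbsRing) (U := U3) (V := R_NormedModule) p3.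
Proof. unfold p3. apply is_linear_snd. Qed.

Lemma FD_p1 x : FD p1 x 1 0 0.
Proof. unfold FD. apply filterdiff_ext_lin with p1. apply filterdiff_linear, lin_p1. intros; rfix; ring. Qed.
Lemma FD_p2 x : FD p2 x 0 1 0.
Proof. unfold FD. apply filterdiff_ext_lin with p2. apply filterdiff_linear, lin_p2. intros; rfix; ring. Qed.
Lemma FD_p3 x : FD p3 x 0 0 1.
Proof. unfold FD. apply filterdiff_ext_lin with p3. apply filterdiff_linear, lin_p3. intros; rfix; ring. Qed.
Lemma FD_const x k : FD (fun _ => k) x 0 0 0.
Proof. unfold FD. eapply filterdiff_ext_lin. apply filterdiff_const. intros; simpl. unfold zero; simpl. rfix; ring. Qed.

Lemma FD_plus f g x f1 f2 f3 g1 g2 g3 : FD f x f1 f2 f3 -> FD g x g1 g2 g3 ->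
  FD (fun t => f t + g t) x (f1 + g1) (f2 + g2) (f3 + g3).
Proof.
  unfold FD; intros Hf Hg. eapply filterdiff_ext_lin.
  apply (filterdiff_plus_fct (V := R_NormedModule) f g _ _ Hf Hg).
  intros; unfold plus; simpl. rfix; ring.
Qed.

Lemma FD_mul f g x f1 f2 f3 g1 g2 g3 : FD f x f1 f2 f3 -> FD g x g1 g2 g3 ->
  FD (fun t => f t * g t) x (f1 * g x + f x * g1) (f2 * g x + f x * g2) (f3 * g x + f x * g3).
Proof.
  unfold FD; intros Hf Hg. eapply filterdiff_ext_lin.
  apply (filterdiff_mult_fct (K := R_AbsRing) f g _ _ _ (fun a b => Rmult_comm a b) Hf Hg).
  intros; unfold plus, mult; simpl. rfix; ring.
Qed.

Lemma FD_inv f x f1 f2 f3 : FD f x f1 f2 f3 -> f x <> 0 ->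
  FD (fun t => / f t) x (- f1 / (f x)^2) (- f2 / (f x)^2) (- f3 / (f x)^2).
Proof.
  unfold FD; intros Hf Hx. eapply filterdiff_ext_lin.
  apply (filterdiff_comp' f Rinv x _ (fun y => scal y (- 1 / f x ^ 2)) Hf).
  { assert (H := is_derive_inv (fun y => y) (f x) 1). apply H.
    apply (is_derive_id (f x)). exact Hx. }
  intros; unfold scal; simpl. unfold mult; simpl. rfix; field. exact Hx.
Qed.

Lemma FD_ext f g x g1 g2 g3 : (exists d : posreal, forall y : V3, Rabs (p1 y - p1 x) < d -> Rabs (p2 y - p2 x) < d -> Rabs (p3 y - p3 x) < d -> f y = g y) ->
  FD f x g1 g2 g3 -> FD g x g1 g2 g3.
Proof.
  intros [d Hd] H. unfold FD. apply (filterdiff_ext_locally f g x); [|exact H].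
  exists d. intros [[y1 y2] y3] [[B1 B2] B3]. apply Hd; assumption.
Qed.

Lemma sqrt_sum_le A B : 0 <= A -> 0 <= B -> sqrt (A ^ 2 + B ^ 2) <= A + B.
Proof.
  intros HA HB. rewrite <- (sqrt_pow2 (A + B)) by lra.
  apply sqrt_le_1_alt. nra.
Qed.

Lemma norm3_le (h : U3) : norm h <= Rabs (p1 h) + Rabs (p2 h) + Rabs (p3 h).
Proof.
  destruct h as [[h1 h2] h3]. unfold p1, p2, p3; simpl.
  change (norm ((h1, h2), h3)) with (sqrt (norm (h1,h2) ^ 2 + norm h3 ^ 2)).
  change (norm (h1, h2)) with (sqrt (norm h1 ^ 2 + norm h2 ^ 2)).
  change (norm h1) with (Rabs h1). change (norm h2) with (Rabs h2). change (norm h3) with (Rabs h3).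
  eapply Rle_trans. apply sqrt_sum_le. apply sqrt_pos. apply Rabs_pos.
  pose proof (sqrt_sum_le (Rabs h1) (Rabs h2) (Rabs_pos _) (Rabs_pos _)). lra.
Qed.

Lemma FD_unfold f x g1 g2 g3 : FD f x g1 g2 g3 ->
  forall eps, 0 < eps -> exists d : posreal, forall y : V3,
    Rabs (p1 y - p1 x) < d -> Rabs (p2 y - p2 x) < d -> Rabs (p3 y - p3 x) < d ->
    Rabs (f y - f x - (g1 * (p1 y - p1 x) + g2 * (p2 y - p2 x) + g3 * (p3 y - p3 x)))
      <= eps * (Rabs (p1 y - p1 x) + Rabs (p2 y - p2 x) + Rabs (p3 y - p3 x)).
Proof.
  intros [_ Hd] eps Heps.
  specialize (Hd x (fun P HP => HP) (mkposreal eps Heps)).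
  destruct Hd as [d Hd]. exists d. intros y B1 B2 B3.
  assert (Hb : ball x d y).
  { destruct x as [[x1 x2] x3], y as [[y1 y2] y3]. unfold p1, p2, p3 in *; simpl in *.
    repeat split; assumption. }
  specialize (Hd y Hb). simpl in Hd.
  pose proof (norm3_le (minus y x)) as Hn.
  destruct x as [[x1 x2] x3], y as [[y1 y2] y3]. unfold p1, p2, p3 in *; simpl in *.
  unfold minus, plus, opp in Hd, Hn; simpl in Hd, Hn. unfold plus, opp in Hd, Hn; simpl in Hd, Hn.
  change (norm ?z) with (Rabs z) in Hd at 1.
  eapply Rle_trans; [|apply Rmult_le_compat_l; [lra|exact Hn]].
  eapply Rle_trans; [|exact Hd]. right. reflexivity.
Qed.

Lemma small_zero (g : R) : (forall eps, 0 < eps -> Rabs g <= 2 * eps) -> g = 0.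
Proof.
  intros H. destruct (Req_dec g 0) as [|Hg]; [assumption|].
  pose proof (Rabs_pos_lt g Hg). specialize (H (Rabs g / 4) ltac:(lra)). lra.
Qed.

Lemma crit_iff (F : R -> R -> R -> R) a b c g1 g2 g3 :
  FD (fun t => F (p1 t) (p2 t) (p3 t)) ((a, b), c) g1 g2 g3 ->
  (is_critical F a b c <-> g1 = 0 /\ g2 = 0 /\ g3 = 0).
Proof.
  intros HF. pose proof (FD_unfold _ _ _ _ _ HF) as HU. split.
  - intros Hc.
    assert (key : forall e1 e2 e3, (e1 = 1 /\ e2 = 0 /\ e3 = 0) \/ (e1 = 0 /\ e2 = 1 /\ e3 = 0) \/ (e1 = 0 /\ e2 = 0 /\ e3 = 1) ->
              g1 * e1 + g2 * e2 + g3 * e3 = 0).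
    { intros e1 e2 e3 He. apply small_zero. intros eps Heps.
      destruct (HU eps Heps) as [d1 Hd1]. destruct (Hc eps Heps) as [d2 [Hd2 Hd2']].
      set (t := Rmin d1 d2 / 2).
      assert (Ht : 0 < t /\ t < d1 /\ t < d2).
      { unfold t. pose proof (cond_pos d1). unfold Rmin. destruct (Rle_dec d1 d2); lra. }
      assert (He' : Rabs e1 <= 1 /\ Rabs e2 <= 1 /\ Rabs e3 <= 1 /\ Rabs e1 + Rabs e2 + Rabs e3 = 1).
      { destruct He as [[-> [-> ->]]|[[-> [-> ->]]|[-> [-> ->]]]]; rewrite ?Rabs_R0, ?Rabs_R1; lra. }
      assert (Hte : forall e, Rabs e <= 1 -> Rabs (t * e) < d1 /\ Rabs (t * e) < d2).
      { intros e Hee. rewrite Rabs_mult, (Rabs_right t) by lra. nra. }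
      destruct He' as [E1 [E2 [E3 E4]]].
      destruct (Hte e1 E1) as [A1 A1'], (Hte e2 E2) as [A2 A2'], (Hte e3 E3) as [A3 A3'].
      specialize (Hd1 ((a + t * e1, b + t * e2), c + t * e3)).
      specialize (Hd2' (t * e1) (t * e2) (t * e3) A1' A2' A3').
      unfold p1, p2, p3 in Hd1; simpl in Hd1.
      replace (a + t * e1 - a) with (t * e1) in Hd1 by ring.
      replace (b + t * e2 - b) with (t * e2) in Hd1 by ring.
      replace (c + t * e3 - c) with (t * e3) in Hd1 by ring.
      specialize (Hd1 A1 A2 A3).
      rewrite !Rabs_mult, (Rabs_right t) in Hd1, Hd2' by lra.
      assert (Hsum : t * Rabs e1 + t * Rabs e2 + t * Rabs e3 = t) by nra.
      rewrite Hsum in Hd1, Hd2'.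
      set (D := F (a + t * e1) (b + t * e2) (c + t * e3) - F a b c) in *.
      assert (Heq : g1 * (t * e1) + g2 * (t * e2) + g3 * (t * e3) = t * (g1 * e1 + g2 * e2 + g3 * e3)) by ring.
      rewrite Heq in Hd1.
      assert (Rabs (t * (g1 * e1 + g2 * e2 + g3 * e3)) <= 2 * eps * t).
      { pose proof (Rabs_triang (D - t * (g1 * e1 + g2 * e2 + g3 * e3)) (- D)).
        replace (D - t * (g1 * e1 + g2 * e2 + g3 * e3) + - D) with (- (t * (g1 * e1 + g2 * e2 + g3 * e3))) in H by ring.
        rewrite Rabs_Ropp in H. rewrite Rabs_Ropp in H. lra. }
      rewrite Rabs_mult, (Rabs_right t) in H by lra. nra. }
    split; [|split].
    + specialize (key 1 0 0 ltac:(lra)). lra.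
    + specialize (key 0 1 0 ltac:(lra)). lra.
    + specialize (key 0 0 1 ltac:(lra)). lra.
  - intros [-> [-> ->]] eps Heps. destruct (HU eps Heps) as [d Hd].
    exists d. split; [apply cond_pos|]. intros h1 h2 h3 H1 H2 H3.
    specialize (Hd ((a + h1, b + h2), c + h3)).
    unfold p1, p2, p3 in Hd; simpl in Hd.
    replace (a + h1 - a) with h1 in Hd by ring.
    replace (b + h2 - b) with h2 in Hd by ring.
    replace (c + h3 - c) with h3 in Hd by ring.
    specialize (Hd H1 H2 H3).
    replace (F (a + h1) (b + h2) (c + h3) - F a b c - (0 * h1 + 0 * h2 + 0 * h3))
      with (F (a + h1) (b + h2) (c + h3) - F a b c) in Hd by ring.
    exact Hd.
Qed.

Lemma FD_eqg f x g1 g2 g3 h1 h2 h3 : FD f x g1 g2 g3 -> g1 = h1 -> g2 = h2 -> g3 = h3 -> FD f x h1 h2 h3.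
Proof. intros H -> -> ->; exact H. Qed.

Lemma FD_fext f g x g1 g2 g3 : (forall t, f t = g t) -> FD f x g1 g2 g3 -> FD g x g1 g2 g3.
Proof. intros H. apply FD_ext. exists (mkposreal 1 Rlt_0_1). intros; apply H. Qed.

Lemma FD_opp f x f1 f2 f3 : FD f x f1 f2 f3 -> FD (fun t => - f t) x (- f1) (- f2) (- f3).
Proof.
  intros H. eapply FD_fext. 2:{ eapply FD_eqg. apply (FD_mul (fun _ => -1) f x 0 0 0 f1 f2 f3 (FD_const x (-1)) H).
  all: simpl; ring. } intros; simpl; ring.
Qed.

Lemma FD_minus f g x f1 f2 f3 g1 g2 g3 : FD f x f1 f2 f3 -> FD g x g1 g2 g3 ->
  FD (fun t => f t - g t) x (f1 - g1) (f2 - g2) (f3 - g3).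
Proof.
  intros Hf Hg. eapply FD_fext. 2:{ eapply FD_eqg. apply (FD_plus _ _ x _ _ _ _ _ _ Hf (FD_opp _ _ _ _ _ Hg)).
  all: ring. } intros; simpl; ring.
Qed.

Lemma FD_pow f x f1 f2 f3 n : FD f x f1 f2 f3 ->
  FD (fun t => f t ^ n) x (INR n * f x ^ (pred n) * f1) (INR n * f x ^ (pred n) * f2) (INR n * f x ^ (pred n) * f3).
Proof.
  intros H. induction n.
  - eapply FD_fext. 2:{ eapply FD_eqg. apply (FD_const x 1). all: simpl; ring. } intros; simpl; ring.
  - eapply FD_fext. 2:{ eapply FD_eqg. apply (FD_mul _ _ x _ _ _ _ _ _ H IHn). all: simpl; rewrite ?S_INR;
      destruct n; simpl; ring. } intros; simpl; ring.
Qed.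

Lemma FD_div f g x f1 f2 f3 g1 g2 g3 : FD f x f1 f2 f3 -> FD g x g1 g2 g3 -> g x <> 0 ->
  FD (fun t => f t / g t) x (f1 / g x - f x * g1 / g x ^ 2) (f2 / g x - f x * g2 / g x ^ 2) (f3 / g x - f x * g3 / g x ^ 2).
Proof.
  intros Hf Hg Hx. eapply FD_fext. 2:{ eapply FD_eqg. apply (FD_mul _ _ x _ _ _ _ _ _ Hf (FD_inv _ _ _ _ _ Hg Hx)).
  all: field; exact Hx. } intros; simpl; unfold Rdiv; ring.
Qed.

Ltac fd_build :=
  lazymatch goal with
  | |- FD (fun _ => ?k) ?x _ _ _ => apply (FD_const x k)
  | |- FD p1 _ _ _ _ => apply FD_p1
  | |- FD p2 _ _ _ _ => apply FD_p2
  | |- FD p3 _ _ _ _ => apply FD_p3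
  | |- FD (fun t => p1 t) _ _ _ _ => apply FD_p1
  | |- FD (fun t => p2 t) _ _ _ _ => apply FD_p2
  | |- FD (fun t => p3 t) _ _ _ _ => apply FD_p3
  | |- FD (fun t => @?A t + @?B t) _ _ _ _ => eapply (FD_plus A B); fd_build
  | |- FD (fun t => @?A t - @?B t) _ _ _ _ => eapply (FD_minus A B); fd_build
  | |- FD (fun t => @?A t * @?B t) _ _ _ _ => eapply (FD_mul A B); fd_build
  | |- FD (fun t => - @?A t) _ _ _ _ => eapply (FD_opp A); fd_build
  | |- FD (fun t => @?A t ^ ?n) _ _ _ _ => eapply (FD_pow A _ _ _ _ n); fd_build
  | |- FD (fun t => @?A t / @?B t) _ _ _ _ => eapply (FD_div A B); [fd_build|fd_build|]
  end.

Goal forall x, exists g1 g2 g3, FD (fun t => 3 * p1 t ^ 2 - p2 t * p3 t + 5 / (1 + p1 t ^ 2)) x g1 g2 g3.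
Proof. intros. do 3 eexists. fd_build. simpl. apply Rgt_not_eq. pose proof (pow2_ge_0 (p1 x)). lra. Qed.


Lemma seg_pos (a c0 p t : R) : 0 < p -> 0 < c0 -> 0 < a * p + c0 -> 0 <= t <= p -> 0 < a * t + c0.
Proof.
  intros Hp H0 H1 Ht.
  replace (a * t + c0) with ((1 - t/p) * c0 + (t/p) * (a * p + c0)) by (field; lra).
  apply conv_pos; try lra. split; [apply Rdiv_le_0_compat; lra|].
  assert (t = (t/p)*p) by (field; lra). nra.
Qed.

Lemma corners p a b c : 0 < p -> (In_U p a b c <->
  (0 < c /\ 0 < a * p + c /\ 0 < c + b /\ 0 < a * p + c + b)).
Proof.
  intros Hp. split.
  - intros H. unfold In_U in H.
    pose proof (H 0 0 ltac:(lra) ltac:(lra)). pose proof (H p 0 ltac:(lra) ltac:(lra)).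
    pose proof (H 0 1 ltac:(lra) ltac:(lra)). pose proof (H p 1 ltac:(lra) ltac:(lra)).
    repeat split; lra.
  - intros [H1 [H2 [H3 H4]]] x y Hx Hy.
    pose proof (seg_pos a c p x Hp H1 H2 Hx).
    pose proof (seg_pos a (c + b) p x Hp H3 ltac:(lra) Hx).
    replace (a * x + b * y + c) with ((1 - y) * (a * x + c) + y * (a * x + (c + b))) by ring.
    apply conv_pos; lra.
Qed.

Definition Dn p a b c := c * (a * p + c) * (c + b) * (a * p + c + b).
Definition NBp p a b c := p * (a * p + c) * c * 0 + p * ((c + b) * (a * p + c + b) + c * (a * p + c))
  + (a * p + c) * (a * p + c + b) + c * (c + b).

Lemma bnd_eq p a b c : 0 < p -> In_U p a b c ->
  boundary_int p a b c = NBp p a b c / Dn p a b c.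
Proof.
  intros Hp HU. apply corners in HU as [H1 [H2 [H3 H4]]]; [|exact Hp].
  unfold boundary_int.
  rewrite (RInt_of_is _ 0 p (p / (c * (a * p + c)))).
  2:{ eapply is_RInt_ext; [|apply (edge_is a c p); lra]. intros; simpl. f_equal. ring. }
  rewrite (RInt_of_is _ 0 p (p / ((b + c) * (a * p + (b + c))))).
  2:{ eapply is_RInt_ext; [|apply (edge_is a (b + c) p); lra]. intros; simpl. f_equal. ring. }
  rewrite (RInt_of_is _ 0 1 (1 / (c * (b * 1 + c)))).
  2:{ eapply is_RInt_ext; [|apply (edge_is b c 1); lra]. intros; simpl. f_equal. ring. }
  rewrite (RInt_of_is _ 0 1 (1 / ((a * p + c) * (b * 1 + (a * p + c))))).
  2:{ eapply is_RInt_ext; [|apply (edge_is b (a * p + c) 1); lra]. intros; simpl. f_equal. ring. }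
  unfold NBp, Dn. field. repeat split; lra.
Qed.

Lemma area_eq p a b c : 0 < p -> In_U p a b c ->
  area_int p a b c = p * Qp (c + a * p) c b / (6 * c^2 * (c + b)^2 * (c + a * p)^2 * (c + a * p + b)^2).
Proof.
  intros Hp HU. pose proof HU as HU'. apply corners in HU as [H1 [H2 [H3 H4]]]; [|exact Hp].
  unfold area_int. apply RInt_of_is.
  eapply is_RInt_ext; [|apply (outer_is a b c p); lra].
  intros x Hx. rewrite Rmin_left in Hx by lra. rewrite Rmax_right in Hx by lra.
  symmetry. apply RInt_of_is.
  pose proof (seg_pos a c p x Hp H1 H2 ltac:(lra)).
  pose proof (seg_pos a (c + b) p x Hp H3 ltac:(lra) ltac:(lra)).
  eapply is_RInt_ext; [|apply (inner_is (a * x + c) b); lra].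
  intros; simpl. f_equal. ring.
Qed.

Definition uu p a := a * p / 2.
Definition vv (b : R) := b / 2.
Definition mm p a b c := c + a * p / 2 + b / 2.
Definition nn p a b c := (p + 1) * mm p a b c ^ 2 + (p - 1) * (vv b ^ 2 - uu p a ^ 2).
Definition qq p a b c := 3 * mm p a b c ^ 4 - 2 * mm p a b c ^ 2 * (uu p a ^ 2 + vv b ^ 2)
   - (uu p a ^ 2 - vv b ^ 2) ^ 2.
Definition G p a b c := 96 * PI ^ 2 / p * (nn p a b c ^ 2 / qq p a b c).

Lemma centered_pos p a b c : 0 < p -> In_U p a b c ->
  let u := uu p a in let v := vv b in let m := mm p a b c in
  0 < m - u - v /\ 0 < m + u - v /\ 0 < m - u + v /\ 0 < m + u + v.
Proof.
  intros Hp HU. apply corners in HU as [H1 [H2 [H3 H4]]]; [|exact Hp].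
  unfold uu, vv, mm; simpl. repeat split; lra.
Qed.

Lemma qq_pos p a b c : 0 < p -> In_U p a b c -> 0 < qq p a b c.
Proof.
  intros Hp HU. pose proof (centered_pos p a b c Hp HU) as [A1 [A2 [A3 A4]]].
  unfold qq. set (u := uu p a) in *. set (v := vv b) in *. set (m := mm p a b c) in *.
  assert (P1 : 0 < (m - u - v) * (m + u + v)) by (apply Rmult_lt_0_compat; lra).
  assert (P2 : 0 < (m + u - v) * (m - u + v)) by (apply Rmult_lt_0_compat; lra).
  assert (S : u^2 + v^2 < m^2) by nra.
  assert (D : (u^2 - v^2)^2 <= (u^2 + v^2)^2) by nra.
  assert (0 < (3 * m^2 + (u^2 + v^2)) * (m^2 - (u^2 + v^2))).
  { apply Rmult_lt_0_compat; nra. }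
  nra.
Qed.

Lemma nn_pos p a b c : 1 <= p -> In_U p a b c -> 0 < nn p a b c.
Proof.
  intros Hp HU. pose proof (centered_pos p a b c ltac:(lra) HU) as [A1 [A2 [A3 A4]]].
  unfold nn. set (u := uu p a) in *. set (v := vv b) in *. set (m := mm p a b c) in *.
  assert (P1 : 0 < (m - u - v) * (m + u + v)) by (apply Rmult_lt_0_compat; lra).
  assert (P2 : 0 < (m + u - v) * (m - u + v)) by (apply Rmult_lt_0_compat; lra).
  assert (S : u^2 + v^2 < m^2) by nra.
  assert (0 <= (p - 1) * v ^ 2) by (apply Rmult_le_pos; nra).
  assert ((p - 1) * u ^ 2 <= (p - 1) * m ^ 2) by (apply Rmult_le_compat_l; nra).
  nra.
Qed.

Lemma E_eq p a b c : 1 <= p -> In_U p a b c -> E p a b c = G p a b c.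
Proof.
  intros Hp HU. pose proof (qq_pos p a b c ltac:(lra) HU) as Hq.
  pose proof HU as HU'. apply corners in HU' as [H1 [H2 [H3 H4]]]; [|lra].
  unfold E. rewrite bnd_eq, area_eq by (lra || exact HU).
  assert (HQ : Qp (c + a * p) c b = 2 * qq p a b c).
  { unfold Qp, qq, uu, vv, mm. field. }
  assert (HN : NBp p a b c = 2 * nn p a b c).
  { unfold NBp, nn, uu, vv, mm. field. }
  rewrite HQ, HN. unfold G, Dn. field. repeat split; lra.
Qed.

Definition Ru p a b c := let u := uu p a in let v := vv b in let m := mm p a b c in
  let n := nn p a b c in let q := qq p a b c in
  4 * u * (n * (m^2 + u^2 - v^2) - (p - 1) * q).
Definition Rv p a b c := let u := uu p a in let v := vv b in let m := mm p a b c in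
  let n := nn p a b c in let q := qq p a b c in
  4 * v * ((p - 1) * q + n * (m^2 - u^2 + v^2)).
Definition Rm p a b c := let u := uu p a in let v := vv b in let m := mm p a b c in
  let n := nn p a b c in let q := qq p a b c in
  4 * m * ((p + 1) * q - n * (3 * m^2 - u^2 - v^2)).

Lemma G_FD p a b c : 1 <= p -> In_U p a b c ->
  FD (fun t => G p (p1 t) (p2 t) (p3 t)) ((a, b), c)
    (96 * PI ^ 2 / p * nn p a b c * (p / 2) * (Ru p a b c + Rm p a b c) / qq p a b c ^ 2)
    (96 * PI ^ 2 / p * nn p a b c * (1 / 2) * (Rv p a b c + Rm p a b c) / qq p a b c ^ 2)
    (96 * PI ^ 2 / p * nn p a b c * Rm p a b c / qq p a b c ^ 2).
Proof.
  intros Hp HU. pose proof (qq_pos p a b c ltac:(lra) HU) as Hq.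
  eapply FD_eqg.
  { unfold G, nn, qq, uu, vv, mm. fd_build.
    all: try lra.
    cbv beta. unfold p1, p2, p3; simpl. unfold qq, uu, vv, mm in Hq. simpl in Hq. lra. }
  all: cbv beta; unfold p1, p2, p3; simpl.
  all: unfold qq, Ru, Rv, Rm, nn, qq, uu, vv, mm in *; simpl in *.
  all: field; split; lra.
Qed.


Lemma U_open p a b c : 1 <= p -> In_U p a b c ->
  exists d : posreal, forall a' b' c', Rabs (a' - a) < d -> Rabs (b' - b) < d -> Rabs (c' - c) < d ->
    In_U p a' b' c'.
Proof.
  intros Hp HU. apply corners in HU as [H1 [H2 [H3 H4]]]; [|lra].
  set (mn := Rmin (Rmin c (a * p + c)) (Rmin (c + b) (a * p + c + b))).
  assert (Hmn : 0 < mn /\ mn <= c /\ mn <= a * p + c /\ mn <= c + b /\ mn <= a * p + c + b).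
  { unfold mn. repeat split;
    repeat (apply Rmin_glb_lt; try lra) ||
    (eapply Rle_trans; [apply Rmin_l|]; try apply Rmin_l; try apply Rmin_r; lra) ||
    (eapply Rle_trans; [apply Rmin_r|]; try apply Rmin_l; try apply Rmin_r; lra). }
  assert (Hd : 0 < mn / (p + 2)) by (apply Rdiv_lt_0_compat; lra).
  exists (mkposreal _ Hd). simpl. intros a' b' c' Ha Hb Hc.
  assert (E1 : mn = (mn / (p + 2)) * (p + 2)) by (field; lra).
  set (d := mn / (p + 2)) in *.
  apply corners; [lra|].
  destruct Hmn as [M0 [M1 [M2 [M3 M4]]]].
  assert (d * p + d + d = mn) by lra.
  apply Rabs_def2 in Ha as [Ha1 Ha2]. apply Rabs_def2 in Hb as [Hb1 Hb2]. apply Rabs_def2 in Hc as [Hc1 Hc2].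
  assert (A1 : (a' - a) * p < d * p) by (apply Rmult_lt_compat_r; lra).
  assert (A2 : - d * p < (a' - a) * p) by nra.
  repeat split; lra.
Qed.

Lemma E_FD p a b c : 1 <= p -> In_U p a b c ->
  FD (fun t => E p (p1 t) (p2 t) (p3 t)) ((a, b), c)
    (96 * PI ^ 2 / p * nn p a b c * (p / 2) * (Ru p a b c + Rm p a b c) / qq p a b c ^ 2)
    (96 * PI ^ 2 / p * nn p a b c * (1 / 2) * (Rv p a b c + Rm p a b c) / qq p a b c ^ 2)
    (96 * PI ^ 2 / p * nn p a b c * Rm p a b c / qq p a b c ^ 2).
Proof.
  intros Hp HU. eapply FD_ext; [|apply (G_FD p a b c Hp HU)].
  destruct (U_open p a b c Hp HU) as [d Hd]. exists d. intros y B1 B2 B3.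
  symmetry. apply E_eq; [exact Hp|]. apply Hd; assumption.
Qed.

Lemma crit_R p a b c : 1 <= p -> In_U p a b c ->
  (is_critical (E p) a b c <-> Ru p a b c = 0 /\ Rv p a b c = 0 /\ Rm p a b c = 0).
Proof.
  intros Hp HU. rewrite (crit_iff _ _ _ _ _ _ _ (E_FD p a b c Hp HU)).
  pose proof (qq_pos p a b c ltac:(lra) HU) as Hq. pose proof (nn_pos p a b c Hp HU) as Hn.
  pose proof PI_RGT_0.
  assert (HK : 0 < 96 * PI ^ 2 / p * nn p a b c / qq p a b c ^ 2).
  { apply Rdiv_lt_0_compat; [|apply pow_lt; lra]. apply Rmult_lt_0_compat; [|lra].
    apply Rdiv_lt_0_compat; [|lra]. apply Rmult_lt_0_compat; [lra|apply pow_lt; lra]. }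
  set (K := 96 * PI ^ 2 / p * nn p a b c / qq p a b c ^ 2) in HK.
  assert (e1 : 96 * PI ^ 2 / p * nn p a b c * (p / 2) * (Ru p a b c + Rm p a b c) / qq p a b c ^ 2
     = K * (p / 2) * (Ru p a b c + Rm p a b c)) by (unfold K; field; lra).
  assert (e2 : 96 * PI ^ 2 / p * nn p a b c * (1 / 2) * (Rv p a b c + Rm p a b c) / qq p a b c ^ 2
     = K * (1 / 2) * (Rv p a b c + Rm p a b c)) by (unfold K; field; lra).
  assert (e3 : 96 * PI ^ 2 / p * nn p a b c * Rm p a b c / qq p a b c ^ 2
     = K * Rm p a b c) by (unfold K; field; lra).
  rewrite e1, e2, e3. split.
  - intros [Z1 [Z2 Z3]].
    apply Rmult_integral in Z3 as [Z3|Z3]; [lra|].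
    rewrite Z3 in Z1, Z2. rewrite Rplus_0_r in Z1, Z2.
    apply Rmult_integral in Z1 as [Z1|Z1]; [apply Rmult_integral in Z1 as [|]; lra|].
    apply Rmult_integral in Z2 as [Z2|Z2]; [apply Rmult_integral in Z2 as [|]; lra|].
    auto.
  - intros [-> [-> ->]]. repeat split; ring.
Qed.

Definition Wf p a c := (4 - 2 * p) * mm p a 0 c ^ 2 + 2 * p * uu p a ^ 2.

Lemma Ru_b0 p a c : Ru p a 0 c = 4 * uu p a * mm p a 0 c ^ 2 * Wf p a c.
Proof. unfold Ru, Wf, nn, qq, uu, vv, mm. field. Qed.
Lemma Rm_b0 p a c : Rm p a 0 c = - 4 * mm p a 0 c * uu p a ^ 2 * Wf p a c.
Proof. unfold Rm, Wf, nn, qq, uu, vv, mm. field. Qed.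
Lemma Rv_b0 p a c : Rv p a 0 c = 0.
Proof. unfold Rv, vv. field. Qed.

Lemma Rv_zero p a b c : 1 <= p -> In_U p a b c -> Rv p a b c = 0 -> b = 0.
Proof.
  intros Hp HU H. pose proof (centered_pos p a b c ltac:(lra) HU) as [A1 [A2 [A3 A4]]].
  pose proof (qq_pos p a b c ltac:(lra) HU) as Hq. pose proof (nn_pos p a b c Hp HU) as Hn.
  unfold Rv in H. simpl in *.
  set (u := uu p a) in *. set (v := vv b) in *. set (m := mm p a b c) in *.
  set (n := nn p a b c) in *. set (q := qq p a b c) in *.
  assert (P1 : 0 < (m - u - v) * (m + u + v)) by (apply Rmult_lt_0_compat; lra).
  assert (P2 : 0 < (m + u - v) * (m - u + v)) by (apply Rmult_lt_0_compat; lra).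
  assert (S : 0 < m^2 - u^2 + v^2) by nra.
  assert (0 <= (p - 1) * q) by (apply Rmult_le_pos; lra).
  assert (0 < n * (m^2 - u^2 + v^2)) by (apply Rmult_lt_0_compat; lra).
  apply Rmult_integral in H as [H|H]; [|lra].
  unfold v, vv in H. lra.
Qed.

Lemma K_facts p : 2 < p ->
  0 < Rpower p (3 / 2) / sqrt (p - 2) /\ (Rpower p (3 / 2) / sqrt (p - 2)) ^ 2 * (p - 2) = p ^ 3.
Proof.
  intros Hp.
  assert (Hr : Rpower p (3 / 2) = p * sqrt p).
  { replace (3 / 2) with (1 + / 2) by field. rewrite Rpower_plus, Rpower_1, Rpower_sqrt by lra. reflexivity. }
  rewrite Hr.
  pose proof (sqrt_lt_R0 p ltac:(lra)). pose proof (sqrt_lt_R0 (p - 2) ltac:(lra)).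
  pose proof (sqrt_sqrt p ltac:(lra)). pose proof (sqrt_sqrt (p - 2) ltac:(lra)).
  split.
  - apply Rdiv_lt_0_compat; [apply Rmult_lt_0_compat|]; lra.
  - field_simplify; [|lra]. replace (sqrt (p - 2) ^ 2) with (p - 2) by (simpl; lra).
    replace (sqrt p ^ 2) with p by (simpl; lra). field. lra.
Qed.

Lemma W_zero_pos p l : 2 < p -> 0 < l ->
  Wf p l (l * (/ 2 * (Rpower p (3 / 2) / sqrt (p - 2) - p))) = 0 /\
  Wf p (- l) (l * (/ 2 * (Rpower p (3 / 2) / sqrt (p - 2) + p))) = 0.
Proof.
  intros Hp Hl. destruct (K_facts p Hp) as [HK1 HK2].
  set (K := Rpower p (3 / 2) / sqrt (p - 2)) in *.
  unfold Wf, mm, uu. split.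
  - transitivity (-(l^2/2) * (K^2*(p-2) - p^3)); [field|rewrite HK2; ring].
  - transitivity (-(l^2/2) * (K^2*(p-2) - p^3)); [field|rewrite HK2; ring].
Qed.

Lemma zero_crit p l : 1 <= p -> Ru p 0 0 l = 0 /\ Rv p 0 0 l = 0 /\ Rm p 0 0 l = 0.
Proof.
  intros Hp. rewrite Ru_b0, Rm_b0, Rv_b0. unfold uu. repeat split; field.
Qed.

Lemma forward_common p a b c : 1 <= p -> In_U p a b c -> is_critical (E p) a b c ->
  b = 0 /\ 0 < mm p a 0 c /\ (a = 0 \/ (a <> 0 /\ Wf p a c = 0)).
Proof.
  intros Hp HU Hc. apply (crit_R p a b c Hp HU) in Hc as [Z1 [Z2 Z3]].
  pose proof (Rv_zero p a b c Hp HU Z2). subst b.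
  pose proof (centered_pos p a 0 c ltac:(lra) HU) as [A1 [A2 [A3 A4]]]. simpl in *.
  assert (Hm : 0 < mm p a 0 c) by lra.
  split; [reflexivity|split; [exact Hm|]].
  rewrite Ru_b0 in Z1.
  destruct (Req_dec a 0) as [Ha|Ha]; [left; exact Ha|right; split; [exact Ha|]].
  apply Rmult_integral in Z1 as [Z1|Z1]; [|exact Z1].
  exfalso. apply Rmult_integral in Z1 as [Z1|Z1].
  - apply Rmult_integral in Z1 as [Z1|Z1]; [lra|]. unfold uu in Z1.
    apply Ha. assert (a * p = 0) by lra. apply Rmult_integral in H as [|]; lra.
  - pose proof (pow_lt _ 2 Hm). lra.
Qed.

Theorem mainTheorem4 (p : R) (hp : 1 <= p) :
  (p <= 2 ->
     forall a b c, In_U p a b c ->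
       (is_critical (E p) a b c <->
          exists l, 0 < l /\ (a, b, c) = (0, 0, l))) /\
  (2 < p ->
     forall a b c, In_U p a b c ->
       (is_critical (E p) a b c <->
          exists l, 0 < l /\
            ((a, b, c) = (0, 0, l) \/
             (a, b, c) = (l, 0, l * (/ 2 * (Rpower p (3 / 2) / sqrt (p - 2) - p))) \/
             (a, b, c) = (- l, 0, l * (/ 2 * (Rpower p (3 / 2) / sqrt (p - 2) + p)))))).
Proof.
  split.
  - intros Hp2 a b c HU. split.
    + intros Hc. destruct (forward_common p a b c hp HU Hc) as [-> [Hm [Ha|[Ha HW]]]].
      * subst a. exists c. apply corners in HU as [H1 _]; [|lra]. split; [exact H1|reflexivity].
      * exfalso. unfold Wf, uu in HW.
        assert (0 < (a * p / 2) ^ 2).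
        { destruct (Rlt_or_le a 0) as [Hn|Hn].
          - replace ((a * p / 2) ^ 2) with ((- a * p / 2) ^ 2) by field. apply pow_lt. nra.
          - apply pow_lt. assert (0 < a) by lra. nra. }
        assert (0 <= (4 - 2 * p) * mm p a 0 c ^ 2) by (apply Rmult_le_pos; [lra|apply pow2_ge_0]).
        nra.
    + intros [l [Hl Heq]]. injection Heq as -> -> ->.
      apply (crit_R p 0 0 l hp HU). apply zero_crit; exact hp.
  - intros Hp2 a b c HU. destruct (K_facts p Hp2) as [HK1 HK2].
    set (K := Rpower p (3 / 2) / sqrt (p - 2)) in *. split.
    + intros Hc. destruct (forward_common p a b c hp HU Hc) as [-> [Hm [Ha|[Ha HW]]]].
      * subst a. exists c. apply corners in HU as [H1 _]; [|lra]. split; [exact H1|left; reflexivity].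
      * unfold Wf, uu, mm in HW, Hm.
        assert (Hs : (c + a * p / 2 + 0 / 2) ^ 2 * (p - 2) = p * (a * p / 2) ^ 2) by nra.
        destruct (Rlt_or_le 0 a) as [Hpos|Hneg].
        -- exists a. split; [exact Hpos|]. right; left.
           assert (c + a * p / 2 = a * K / 2).
           { assert (Ht : 0 < a * K / 2) by (unfold Rdiv; apply Rmult_lt_0_compat; [apply Rmult_lt_0_compat|]; lra).
             assert (Hsq : (c + a * p / 2) ^ 2 = (a * K / 2) ^ 2).
             { apply (Rmult_eq_reg_r (p - 2)); [|lra].
               replace (c + a * p / 2) with (c + a * p / 2 + 0 / 2) by field. rewrite Hs.
               transitivity (a ^ 2 / 4 * p ^ 3); [field|]. rewrite <- HK2. field. }
             assert (Hm' : 0 < c + a * p / 2) by (replace (c + a * p / 2) with (c + a * p / 2 + 0 / 2) by field; lra).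
             nra. }
           f_equal. field_simplify. lra.
        -- assert (Hneg' : a < 0) by lra. exists (- a). split; [lra|]. right; right.
           assert (c + a * p / 2 = - a * K / 2).
           { assert (Ht : 0 < - a * K / 2) by nra.
             assert (Hsq : (c + a * p / 2) ^ 2 = (- a * K / 2) ^ 2).
             { apply (Rmult_eq_reg_r (p - 2)); [|lra].
               replace (c + a * p / 2) with (c + a * p / 2 + 0 / 2) by field. rewrite Hs.
               transitivity (a ^ 2 / 4 * p ^ 3); [field|]. rewrite <- HK2. field. }
             assert (Hm' : 0 < c + a * p / 2) by (replace (c + a * p / 2) with (c + a * p / 2 + 0 / 2) by field; lra).
             nra. }
           rewrite Ropp_involutive. f_equal. field_simplify. lra.
    + intros [l [Hl [Heq|[Heq|Heq]]]]; injection Heq as -> -> ->;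
        apply (crit_R _ _ _ _ hp HU).
      * apply zero_crit; exact hp.
      * destruct (W_zero_pos p l Hp2 Hl) as [W1 _].
        rewrite Ru_b0, Rm_b0, Rv_b0. fold K in W1. rewrite W1. repeat split; ring.
      * destruct (W_zero_pos p l Hp2 Hl) as [_ W2].
        rewrite Ru_b0, Rm_b0, Rv_b0. fold K in W2. rewrite W2. repeat split; ring.
Qed.
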